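(* Let $d\ge 3$, $g\ge d$, and write $g=k(d-1)+s$ with $k\ge1$ and $0\le s\le d-2$; put $b=2g+2d-2$. Among all $(d-1)$-tuples that are acceptable for $(d,g)$ and have $a_1=k$, the unique one maximizing $\sum_{i=1}^{d-1}(d-i)a_i$ is: (1) if $s\le d-4$: $(k,(k+1)^{d-s-3},(k+2)^{s+1})$; (2) if $s=d-3$ and $g\neq 2(d-2)$: $(k,(k+2)^{d-2})$; (3) if $s=d-2$, $g\ne 2d-3$ and $(d,g)\ne(3,5)$: $(k,(k+2)^{d-3},k+3)$. (Here $x^m$ denotes $m$ consecutive entries equal to $x$.)
   Context: A non-decreasing $(d-1)$-tuple of natural numbers $(a_1,\dots,a_{d-1})$ with $\sum_{i=1}^{d-1}a_i=b/2$ (where $b=2g+2d-2$, so $b/2=(k+1)(d-1)+s$) is called acceptable for $(d,g)$ if (i) $a_1\ge b/(d(d-1))$; (ii) $a_{d-1}\le b/d$; (iii) $a_{i+1}-a_i\le a_1$ for all $i$. *)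

(* Defs.v *)
From mathcomp Require Import all_boot.
Set Implicit Arguments. Unset Strict Implicit. Unset Printing Implicit Defensive.

Definition bval (d g : nat) : nat := 2 * g + 2 * d - 2.

(* A (d-1)-tuple (a_1,...,a_{d-1}) is represented by a list [a; of length d-1,
   with a_i = nth 0 a (i-1). *)
Definition acceptable (d g : nat) (a : seq nat) : Prop :=
  [/\ size a = d.-1 /\ sorted leq a,
      2 * sumn a = bval d g,
      bval d g <= nth 0 a 0 * (d * (d - 1)),         (* (i) a_1 >= b/(d(d-1)) *)
      d * nth 0 a (d - 2) <= bval d g                (* (ii) a_{d-1} <= b/d *)
    & forall i, i.+1 < d.-1 ->
        nth 0 a i.+1 - nth 0 a i <= nth 0 a 0 ].     (* (iii) a_{i+1}-a_i <= a_1 *)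

Definition weight (d : nat) (a : seq nat) : nat :=
  \sum_(i < d.-1) (d - i.+1) * nth 0 a i.

Definition unique_maximizer (d g k : nat) (a : seq nat) : Prop :=
  [/\ acceptable d g a, nth 0 a 0 = k &
      forall a', acceptable d g a' -> nth 0 a' 0 = k -> a' <> a ->
        weight d a' < weight d a].

(* Main.v *)
Require Import Defs.
From mathcomp Require Import all_boot zify.

Definition W m (t : seq nat) := \sum_(i<m) (m - i) * nth 0 t i.
Definition P j (t : seq nat) := \sum_(i<j) nth 0 t i.
Definition cc u r q := nseq u q ++ nseq r q.+1.

Lemma W_P m t : W m t = \sum_(j<m) P j.+1 t.
Proof.
elim: m => [|m IH]; first by rewrite /W !big_ord0.
rewrite /W big_ord_recr /= [in RHS]big_ord_recr /= -IH /W /P big_ord_recr /=.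
have -> : \sum_(i < m) (m.+1 - i) * nth 0 t i =
   \sum_(i < m) (m - i) * nth 0 t i + \sum_(i < m) nth 0 t i.
  rewrite -big_split /=; apply: eq_bigr => i _.
  have hi := ltn_ord i. rewrite subSn; [by rewrite mulSn addnC | lia].
by rewrite subSn // subnn mul1n addnA.
Qed.

Lemma weight_cons m x t : weight m.+2 (x::t) = m.+1 * x + W m t.
Proof.
rewrite /weight /W /= big_ord_recl /=.
have -> : \sum_(i < m) (m.+2 - (bump 0 i).+1) * nth 0 t (0 + i) = \sum_(i<m) (m-i)*nth 0 t i.
  apply: eq_bigr => i _; rewrite /bump /= add0n. congr (_ * _). lia.

Qed.

Lemma nth_c u r q i : nth 0 (cc u r q) i = if i < u then q else if i < u + r then q.+1 else 0.
Proof.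
rewrite /cc nth_cat size_nseq !nth_nseq. case: ifP => h; first by rewrite h.
case: ifP; case: ifP => //; lia.
Qed.

Lemma P_c u r q j : j <= u + r -> P j (cc u r q) = j * q + (j - u).
Proof.
elim: j => [|j IH] hj; first by rewrite /P big_ord0.
rewrite /P big_ord_recr /= -/(P j _) IH; last lia.
rewrite nth_c. case: ifP => h1; first lia. case: ifP => h2; lia.
Qed.

Lemma sumn_c u r q : sumn (cc u r q) = u * q + r * q.+1.
Proof. by rewrite /cc sumn_cat !sumn_nseq mulnC [r * _]mulnC. Qed.

Lemma bound u r q t j : sorted leq t -> size t = u + r ->
  sumn t = u * q + r * q.+1 -> j <= u + r -> P j t <= j * q + (j - u).
Proof.
move=> st sz sm hj. rewrite leqNgt; apply/negP => hlt.
case: j hj hlt => [|j] hj hlt; first by rewrite /P big_ord0 in hlt.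
set x := nth 0 t j.
have h1 : P j.+1 t <= j.+1 * x.
  rewrite /P -[X in _ <= X * _]card_ord -sum_nat_const. apply: leq_sum => i _.
  apply: (sorted_leq_nth leq_trans leqnn) => //; rewrite ?unfold_in /= ?sz; have := ltn_ord i; lia.
have hx : q < x.
  rewrite ltnNge; apply/negP => hq.
  have : j.+1 * x <= j.+1 * q by rewrite leq_mul2l hq orbT. lia.
have h2 : (u + r - j.+1) * x <= \sum_(j.+1 <= i < u + r) nth 0 t i.
  rewrite -sum_nat_const_nat big_nat_cond [X in _ <= X]big_nat_cond.
  apply: leq_sum => i /andP[/andP [h3 h4] _].
  apply: (sorted_leq_nth leq_trans leqnn) => //; rewrite ?unfold_in /= ?sz; lia.
have hs : sumn t = P j.+1 t + \sum_(j.+1 <= i < u + r) nth 0 t i.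
  rewrite sumnE (big_nth 0) sz (@big_cat_nat _ _ _ j.+1) //= big_mkord //.
have h3 : (u + r - j.+1) * q.+1 <= (u + r - j.+1) * x by rewrite leq_mul2l hx orbT.
set w := u + r - j.+1 in h2 h3.
have e : u + r = j.+1 + w by rewrite /w; lia.
have e2 : u * q + r * q.+1 = (j.+1 + w) * q + r by rewrite -e mulnS mulnDl; lia.
have e3 : w * q.+1 = w * q + w by rewrite mulnS addnC.
rewrite mulnDl in e2.
lia.
Qed.

Lemma maxim u r q t : sorted leq t -> size t = u + r ->
  sumn t = sumn (cc u r q) -> t <> cc u r q ->
  W (u + r) t < W (u + r) (cc u r q).
Proof.
move=> st sz sm ne. rewrite sumn_c in sm. rewrite !W_P.
have H : forall j : 'I_(u+r), P j.+1 t <= P j.+1 (cc u r q).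
  move=> j; rewrite P_c ?(ltn_ord j) //. exact: (bound _ _ _ _ _ st sz sm (ltn_ord j)).
case: (boolP [exists j : 'I_(u+r), P j.+1 t < P j.+1 (cc u r q)]) => [/existsP [j hj] | hne].
  rewrite (bigD1 j) //= [X in _ < X](bigD1 j) //=.
  have h2 : \sum_(i < u+r | i != j) P i.+1 t <= \sum_(i < u+r | i != j) P i.+1 (cc u r q).
    by apply: leq_sum => i _; exact: H.
  exact: leq_add hj h2.
exfalso; apply: ne.
have Heq : forall j, j < u + r -> P j.+1 t = P j.+1 (cc u r q).
  move=> j hj; have /= h := H (Ordinal hj).
  apply/eqP; rewrite eqn_leq h /= leqNgt; apply/negP => hl.
  move/negP: hne; apply; apply/existsP; by exists (Ordinal hj).
apply: (@eq_from_nth _ 0); first by rewrite sz /cc size_cat !size_nseq.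
move=> i; rewrite sz => hi.
have e3 : P i t = P i (cc u r q).
  case: i hi => [|i] hi; first by rewrite /P !big_ord0.
  apply: Heq; lia.
have e1 : P i.+1 t = P i t + nth 0 t i by rewrite /P big_ord_recr.
have e2 : P i.+1 (cc u r q) = P i (cc u r q) + nth 0 (cc u r q) i by rewrite /P big_ord_recr.
have := Heq i hi. lia.
Qed.

Lemma acc_c d g k u r q : d = (u + r).+2 -> 0 < u + r -> 1 <= k -> k <= q ->
  2 * (k + (u * q + r * q.+1)) = bval d g ->
  bval d g <= k * (d * (d - 1)) ->
  d * (if r == 0 then q else q.+1) <= bval d g ->
  (0 < u -> q <= k + k) -> (u = 0 -> q.+1 <= k + k) ->
  acceptable d g (k :: cc u r q).
Proof.
move=> hd hur hk hkq hsum hi hii h1 h2; subst d.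
split => //.
- split; first by rewrite /= /cc size_cat !size_nseq.
  apply/(sortedP 0) => i; rewrite /= /cc size_cat !size_nseq -/(cc u r q) => hi'.
  case: i hi' => [|i] hi' /=; rewrite !nth_c; repeat case: ifP; lia.
- by rewrite /= sumn_c.
- have -> : (u + r).+2 - 2 = (u + r).-1.+1 by lia.
  rewrite /= nth_c. move: hii; case: eqP => hr; repeat case: ifP; lia.
- move=> i hi'; case: i hi' => [|i] hi' /=; rewrite !nth_c; repeat case: ifP; lia.
Qed.

Lemma um d g k u r q : d = (u + r).+2 -> acceptable d g (k :: cc u r q) ->
  unique_maximizer d g k (k :: cc u r q).
Proof.
move=> hd acc; split => //.
move=> [|x t] [[sz st] sm _ _ _] h0 ne; first by rewrite hd in sz.
rewrite /= in h0; subst x.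
case: acc => [[_ _] smc _ _ _].
rewrite hd !weight_cons ltn_add2l.
apply: maxim.
- exact: path_sorted st.
- by rewrite hd in sz; case: sz.
- rewrite -smc /= in sm; lia.
- by move=> e; apply: ne; rewrite e.
Qed.

Lemma cond_i d g k s : 3 <= d -> d <= g -> 1 <= k -> s <= d - 2 -> g = k * (d - 1) + s ->
  g <> 2 * (d - 2) -> g <> 2 * d - 3 -> (d, g) <> (3, 5) ->
  bval d g <= k * (d * (d - 1)).
Proof.
move=> hd hdg hk hs hg h1 h2 h3. rewrite /bval.
have [n hn0] : exists n, d = n + 3 by exists (d - 3); lia.
subst d.
have e1 : n + 3 - 1 = n + 2 by lia.
rewrite e1 in hg *. subst g.
have ex : k * (n + 3) * (n + 2) = k * (n + 2) * 2 + k * (n + 1) * (n + 2).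
  lia.
rewrite mulnA ex.
case: (leqP 4 (k * (n + 1))) => hb.
  have : 4 * (n + 2) <= k * (n + 1) * (n + 2) by rewrite leq_mul2r hb orbT.
  lia.
have hk3 : k <= 3 by nia.
have hn : n <= 2 by nia.
have h3' : ~ (n = 0 /\ k * (n + 2) + s = 5) by move=> [en e]; apply: h3; rewrite e en.
move: hk3 hn hk hs hdg h1 h2 h3' hb; clear.
case: k => [|[|[|[|k]]]] //; case: n => [|[|[|n]]] //= *; try lia.
Qed.

Theorem mainTheorem4 (d g k s : nat) :
  3 <= d -> d <= g -> 1 <= k -> s <= d - 2 -> g = k * (d - 1) + s ->
  [/\ s + 4 <= d ->
        unique_maximizer d g k
          ([:: k] ++ nseq (d - s - 3) k.+1 ++ nseq s.+1 k.+2),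
      s = d - 3 -> g <> 2 * (d - 2) ->
        unique_maximizer d g k ([:: k] ++ nseq (d - 2) k.+2)
    & s = d - 2 -> g <> 2 * d - 3 -> (d, g) <> (3, 5) ->
        unique_maximizer d g k ([:: k] ++ nseq (d - 3) k.+2 ++ [:: k + 3])].
Proof.
move=> hd hdg hk hs hg.
have [n hn] : exists n, d = n + 3 by exists (d - 3); lia.
split.
- move=> h4.
  have hd' : d = (d - s - 3 + s.+1).+2 by lia.
  apply: (@um d g k (d - s - 3) s.+1 k.+1) => //.
  apply: acc_c => //.
  + lia.
  + rewrite /bval hg. subst d. have -> : n + 3 - s - 3 = n - s by lia.
    have [e he] : exists e, n = e + s.+1 by exists (n - s.+1); lia.
    subst n. have -> : e + s.+1 - s = e.+1 by lia.
    have -> : e + s.+1 + 3 - 1 = e + s + 3 by lia. nia.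
  + have hk' : k = 1 \/ 2 * (d - 1) <= k * (d - 1).
      by case: k hk {hg hdg} => [|[|k]] //; [left | right; apply: leq_mul].
    apply: (@cond_i d g k s) => //; try (move=> [e _]; lia); rewrite hg; case: hk' => [->|h]; lia.
  + rewrite /= /bval hg. subst d. have -> : n + 3 - 1 = n + 2 by lia.
    have [e he] : exists e, n = e + s.+1 by exists (n - s.+1); lia. subst n. nia.
  + move=> _; lia.
  + lia.
- move=> h3 hg2.
  have hk2 : 2 <= k.
    case: (ltnP 1 k) => // hk1. have k1 : k = 1 by lia.
    exfalso; apply: hg2; rewrite hg k1; lia.
  have -> : [:: k] ++ nseq (d - 2) k.+2 = k :: cc (d - 2) 0 k.+2 by rewrite /cc /= cats0.
  have hd' : d = (d - 2 + 0).+2 by lia.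
  apply: um => //; apply: acc_c => //.
  + lia.
  + lia.
  + rewrite /bval hg h3. subst d. have -> : n + 3 - 1 = n + 2 by lia.
    have -> : n + 3 - 2 = n + 1 by lia. have -> : n + 3 - 3 = n by lia. nia.
  + have hkd : 2 * (d - 1) <= k * (d - 1) by apply: leq_mul.
    apply: (@cond_i d g k s) => //; try lia. move=> [e1 e2]; move: e2; rewrite hg h3 e1; lia.
  + rewrite /= /bval hg h3. subst d. have -> : n + 3 - 1 = n + 2 by lia.
    have -> : n + 3 - 3 = n by lia. nia.
  + move=> _; lia.
  + lia.
- move=> h3 hg2 hg3.
  have hk2 : 2 <= k.
    case: (ltnP 1 k) => // hk1. have k1 : k = 1 by lia.
    exfalso; apply: hg2; rewrite hg k1; lia.
  have hk3 : n = 0 -> 3 <= k.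
    move=> n0; case: (ltnP 2 k) => // hk1. have k1 : k = 2 by lia.
    exfalso; apply: hg3; rewrite hg k1 h3 hn n0; by [].
  have -> : [:: k] ++ nseq (d - 3) k.+2 ++ [:: k + 3] = k :: cc (d - 3) 1 k.+2
    by rewrite /cc /= addn3.
  have hd' : d = (d - 3 + 1).+2 by lia.
  apply: um => //; apply: acc_c => //.
  + lia.
  + lia.
  + rewrite /bval hg h3. subst d. have -> : n + 3 - 1 = n + 2 by lia.
    have -> : n + 3 - 2 = n + 1 by lia. have -> : n + 3 - 3 = n by lia. nia.
  + have hkd : 2 * (d - 1) <= k * (d - 1) by apply: leq_mul.
    apply: (@cond_i d g k s) => //; lia.
  + rewrite /= /bval hg h3. subst d. have -> : n + 3 - 1 = n + 2 by lia.
    have -> : n + 3 - 2 = n + 1 by lia. nia.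
  + move=> _; lia.
  + move=> u0; have := hk3 ltac:(lia); lia.
Qed.
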